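(* For any commutative ring $A$, the following are equivalent: (1) $\Gamma(A)$ is path-connected. (2) For any unimodular row $(a,b)$, there exist $a_0,\ldots,a_n\in A$ such that $[a,b]= \infty\cdot S(a_n)S(a_{n-1})\cdots S(a_0)$. (3) Any unimodular pair $(a,b)$ satisfies a weak Euclidean algorithm. (4) $A$ is a $\mathrm{GE}_2$-ring.
   Context: $\Gamma(A)$ is the graph whose vertices are classes $[a,b]$ of unimodular rows modulo multiplication by units, with an edge between $[u],[v]$ when the matrix with rows $u,v$ is in $\mathrm{GL}_2(A)$; $\mathrm{GL}_2(A)$ acts on the right, and $\infty$ denotes the class of $(1,0)$. $S(a)=\left[\begin{smallmatrix}a&1\\1&0\end{smallmatrix}\right]$. A pair $(a,b)$ satisfies a weak Euclidean algorithm if there exist $a_0,\ldots,a_n,r_0,\ldots,r_{n-1}\in A$ such that, with $r_{-2}:=a$, $r_{-1}:=b$, $r_n:=0$, one has $r_{k-2}=a_kr_{k-1}+r_k$ for $0\le k\le n$. $A$ is a $\mathrm{GE}_2$-ring if $\mathrm{GL}_2(A)$ is generated by elementary and invertible diagonal matrices. *)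

(* Defs.v *)
From HB Require Import structures.
From mathcomp Require Import all_boot all_order all_algebra.
Set Implicit Arguments. Unset Strict Implicit. Unset Printing Implicit Defensive.
Import GRing.Theory.
Local Open Scope ring_scope.

Section Gamma.
Variable A : comPzRingType.

Definition is_unitA (u : A) : Prop := exists v, u * v = 1.

Definition unimodular (a b : A) : Prop := exists x y, x * a + y * b = 1.

Definition mx2 (a b c d : A) : 'M[A]_2 :=
  \matrix_(i < 2, j < 2)
    if (i == 0 :> nat) then (if (j == 0 :> nat) then a else b)
    else (if (j == 0 :> nat) then c else d).
Definition row2 (a b : A) : 'rV[A]_2 :=
  \row_(j < 2) if (j == 0 :> nat) then a else b.

Definition GL2 (M : 'M[A]_2) : Prop :=
  exists N : 'M[A]_2, M *m N = 1%:M /\ N *m M = 1%:M.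

(* rows (a,b) and (c,d) represent the same vertex [a,b] = [c,d] of Gamma(A) *)
Definition same_class (a b c d : A) : Prop :=
  exists u, is_unitA u /\ c = u * a /\ d = u * b.

(* edge of Gamma(A) between [a,b] and [c,d] (independent of representatives) *)
Definition Gedge (a b c d : A) : Prop := GL2 (mx2 a b c d).

Definition Gamma_connected : Prop :=
  forall a b c d : A, unimodular a b -> unimodular c d ->
    exists (n : nat) (w : nat -> A * A),
      same_class a b (w 0%N).1 (w 0%N).2 /\
      same_class c d (w n).1 (w n).2 /\
      (forall i, (i <= n)%N -> unimodular (w i).1 (w i).2) /\
      (forall i, (i < n)%N -> Gedge (w i).1 (w i).2 (w i.+1).1 (w i.+1).2).

Definition Smx (x : A) : 'M[A]_2 := mx2 x 1 1 0.

Fixpoint Sprod (n : nat) (x : nat -> A) : 'M[A]_2 :=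
  match n with
  | 0%N => Smx (x 0%N)
  | m.+1 => Smx (x m.+1) *m Sprod m x
  end.

(* infty = class of (1,0); right action of GL_2 on classes *)
Definition infty_act (M : 'M[A]_2) : 'rV[A]_2 := row2 1 0 *m M.

Definition reached_by_S (a b : A) : Prop :=
  exists (n : nat) (x : nat -> A) (u : A),
    is_unitA u /\ infty_act (Sprod n x) = u *: row2 a b.

(* weak Euclidean algorithm for (a,b): with r' k := r_(k-2),
   r' 0 = a, r' 1 = b, r' (n+2) = 0 and r_(k-2) = a_k r_(k-1) + r_k, 0<=k<=n *)
Definition weak_euclid (a b : A) : Prop :=
  exists (n : nat) (q r' : nat -> A),
    r' 0%N = a /\ r' 1%N = b /\ r' n.+2 = 0 /\
    (forall k, (k <= n)%N -> r' k = q k * r' k.+1 + r' k.+2).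

Definition GE2_generator (M : 'M[A]_2) : Prop :=
  (exists x, M = mx2 1 x 0 1) \/ (exists x, M = mx2 1 0 x 1) \/
  (exists u v, is_unitA u /\ is_unitA v /\ M = mx2 u 0 0 v).

(* the subgroup generated by elementary and invertible diagonal matrices
   (closed under inverses since the generating set is) *)
Inductive in_GE2 : 'M[A]_2 -> Prop :=
| GE2_one : in_GE2 1%:M
| GE2_mul M N : GE2_generator M -> in_GE2 N -> in_GE2 (M *m N).

Definition GE2_ring : Prop := forall M : 'M[A]_2, GL2 M -> in_GE2 M.

End Gamma.

(* Main.v *)
Require Import Defs.
From HB Require Import structures.
From mathcomp Require Import all_boot all_order all_algebra.
From mathcomp Require Import ring.
Set Implicit Arguments. Unset Strict Implicit. Unset Printing Implicit Defensive.
Import GRing.Theory.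
Local Open Scope ring_scope.
Section S.
Variable A : comPzRingType.
Implicit Types a b c d p q r e f g h u v : A.
Lemma row2_mul a b p q r (s : A) : row2 a b *m mx2 p q r s = row2 (a* p + b* r) (a* q+b* s).
Proof.
apply/rowP => j; rewrite !mxE !big_ord_recl big_ord0 !mxE /=.
by case: j => [[|[|j]] Hj] //=; rewrite addr0.
Qed.
Lemma mx2_mul a b c d p q r (s : A) : mx2 a b c d *m mx2 p q r s =
  mx2 (a* p + b* r) (a* q+b* s) (c* p + d* r) (c* q+d* s).
Proof.
apply/matrixP => i j; rewrite !mxE !big_ord_recl big_ord0 !mxE /=.
by case: i => [[|[|i]] Hi]; case: j => [[|[|j]] Hj] //=; rewrite addr0.
Qed.
Lemma mx2E (M : 'M[A]_2) : M = mx2 (M 0 0) (M 0 1) (M 1 0) (M 1 1).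
Proof.
apply/matrixP => i j; rewrite !mxE.
by case: i => [[|[|i]] Hi]; case: j => [[|[|j]] Hj] //=; congr (M _ _); apply/val_inj.
Qed.
Lemma row2E (v : 'rV[A]_2) : v = row2 (v 0 0) (v 0 1).
Proof.
apply/rowP => j; rewrite !mxE.
by case: j => [[|[|j]] Hj] //=; congr (v _ _); apply/val_inj.
Qed.
Lemma mx2_1 : 1%:M = mx2 1 0 0 1 :> 'M[A]_2.
Proof.
apply/matrixP => i j; rewrite !mxE.
by case: i => [[|[|i]] Hi]; case: j => [[|[|j]] Hj].
Qed.
Lemma row2_inj a b c d : row2 a b = row2 c d -> a = c /\ b = d.
Proof.
move/rowP => H; split; [have := H 0 | have := H 1]; rewrite !mxE //.
Qed.
Lemma mx2_inj a b c d a' b' c' d' : mx2 a b c d = mx2 a' b' c' d' ->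
  [/\ a = a', b = b', c = c' & d = d'].
Proof.
move/matrixP => H; split; [have := H 0 0 | have := H 0 1 | have := H 1 0 | have := H 1 1]; rewrite !mxE //.
Qed.
Lemma scale_row2 u a b : u *: row2 a b = row2 (u* a) (u* b).
Proof. by apply/rowP => j; rewrite !mxE; case: ifP. Qed.
Lemma mx2_surj (M : 'M[A]_2) : exists a b c d, M = mx2 a b c d.
Proof. by exists (M 0 0), (M 0 1), (M 1 0), (M 1 1); apply: mx2E. Qed.
Lemma row2_surj (v : 'rV[A]_2) : exists a b, v = row2 a b.
Proof. by exists (v 0 0), (v 0 1); apply: row2E. Qed.

Fixpoint Sl (s : seq A) : 'M[A]_2 :=
  if s is x :: s' then Smx x *m Sl s' else 1%:M.

Lemma GL2_mul (M N : 'M[A]_2) : GL2 M -> GL2 N -> GL2 (M *m N).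
Proof.
move=> [M' [H1 H2]] [N' [H3 H4]]; exists (N' *m M'); split.
  by rewrite mulmxA -(mulmxA M) H3 mulmx1 H1.
by rewrite mulmxA -(mulmxA N') H2 mulmx1 H4.
Qed.
Lemma GL2_1 : @GL2 A 1%:M.
Proof. by exists 1%:M; rewrite mulmx1. Qed.
Lemma GL2_mx2 a b c d e f g h :
  mx2 a b c d *m mx2 e f g h = 1%:M -> mx2 e f g h *m mx2 a b c d = 1%:M ->
  GL2 (mx2 a b c d).
Proof. by move=> H1 H2; exists (mx2 e f g h). Qed.
Lemma Smx_GL (x : A) : GL2 (Smx x).
Proof.
apply: (@GL2_mx2 _ _ _ _ 0 1 1 (-x)); rewrite mx2_mul mx2_1; congr mx2; ring.
Qed.
Lemma Sl_GL (s : seq A) : GL2 (Sl s).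
Proof. elim: s => [|x s IH] /=; [exact: GL2_1 | exact: GL2_mul (Smx_GL x) IH]. Qed.
Lemma Sprod_GL n (x : nat -> A) : GL2 (Sprod n x).
Proof. elim: n => [|n IH] /=; [exact: Smx_GL | exact: GL2_mul (Smx_GL _) IH]. Qed.

Lemma S00 : Smx (0:A) *m Smx 0 = 1%:M.
Proof. by rewrite /Smx mx2_mul mx2_1; congr mx2; ring. Qed.

Lemma Sprod_ext n (x y : nat -> A) : (forall i, (i <= n)%N -> x i = y i) -> Sprod n x = Sprod n y.
Proof.
elim: n => [|n IH] H /=; first by rewrite H.
by rewrite H // IH // => i Hi; apply: H; apply: leqW.
Qed.

Lemma Sl_Sprod1 (s : seq A) (y : A) : exists n x, Sprod n x = Sl (y :: s).
Proof.
elim: s y => [|z s IH] y.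
  by exists 0%N, (fun _ => y); rewrite /= mulmx1.
have [n [x E]] := IH z.
exists n.+1, (fun i => if i == n.+1 then y else x i).
have -> : Sl [:: y, z & s] = Smx y *m Sl (z :: s) by [].
rewrite -E /= eqxx; congr (_ *m _); apply: Sprod_ext => i Hi.
by rewrite ifN // neq_ltn ltnS Hi.
Qed.

Lemma Sl_Sprod (s : seq A) : exists n x, Sprod n x = Sl s.
Proof.
have [n [x E]] := Sl_Sprod1 (0 :: s) 0; exists n, x; rewrite E /= mulmxA S00 mul1mx //.
Qed.

Lemma Sprod_shift n (x : nat -> A) : Sprod n.+1 x = Sprod n (fun i => x i.+1) *m Smx (x 0%N).
Proof.
elim: n x => [|n IH] x //.
change (Sprod n.+2 x) with (Smx (x n.+2) *m Sprod n.+1 x).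
rewrite IH mulmxA //.
Qed.

Lemma inf_mul (M : 'M[A]_2) : row2 1 0 *m M = row2 (M 0 0) (M 0 1).
Proof. by rewrite {1}(mx2E M) row2_mul; congr row2; ring. Qed.

Lemma GL2_unimod a b c d : GL2 (mx2 a b c d) -> unimodular a b.
Proof.
move=> [N [H _]]; have [e [f [g [h EN]]]] := mx2_surj N; subst N.
move: H; rewrite mx2_mul mx2_1 => /mx2_inj [H _ _ _].
by exists e, g; rewrite -H; ring.
Qed.

Lemma Gedge_sym a b c d : Gedge a b c d -> Gedge c d a b.
Proof.
move=> H; rewrite /Gedge; have -> : mx2 c d a b = Smx 0 *m mx2 a b c d.
  by rewrite /Smx mx2_mul; congr mx2; ring.
exact: GL2_mul (Smx_GL 0) H.
Qed.

Definition inf : 'rV[A]_2 := row2 1 0.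

Lemma we_reached a b : unimodular a b -> weak_euclid a b -> reached_by_S a b.
Proof.
move=> [x [y Hxy]] [n [q [r [H0 [H1 [H2 Hk]]]]]].
have key: forall j, (j <= n)%N -> row2 a b = row2 (r j.+1) (r j.+2) *m Sprod j q.
  elim=> [|j IH] Hj.
    rewrite /= /Smx row2_mul -H0 -H1 (Hk 0%N Hj); congr row2; ring.
  rewrite IH ?(ltnW Hj) //; change (Sprod j.+1 q) with (Smx (q j.+1) *m Sprod j q).
  rewrite mulmxA; congr (_ *m _); rewrite /Smx row2_mul (Hk j.+1 Hj); congr row2; ring.
have := key n (leqnn n); rewrite H2 => E.
have [w0 [w1 Ew]] := row2_surj (row2 1 0 *m Sprod n q).
have E2 : row2 a b = r n.+1 *: row2 w0 w1.
  by rewrite E -Ew scalemxAl scale_row2 mulr1 mulr0.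
move: (E2); rewrite scale_row2 => /row2_inj [Ea Eb].
exists n, q, (x * w0 + y * w1); split.
  by exists (r n.+1); rewrite -Hxy Ea Eb; ring.
rewrite /infty_act Ew E2 scalerA.
have -> : (x * w0 + y * w1) * r n.+1 = 1 by rewrite -Hxy Ea Eb; ring.
by rewrite scale1r.
Qed.

Lemma reached_we_aux n : forall (x : nat -> A) c a b,
  row2 a b = c *: (row2 1 0 *m Sprod n x) -> weak_euclid a b.
Proof.
elim: n => [|n IH] x c a b E.
  move: E; rewrite /= /Smx row2_mul scale_row2 => /row2_inj [Ea Eb].
  exists 0%N, (fun _ => x 0%N), (fun k => if k is 0 then a else if k is 1 then b else 0).
  do 3!split => //; case=> // _; rewrite Ea Eb; ring.
move: E; rewrite Sprod_shift mulmxA scalemxAl.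
have [v0 [v1 Ev]] := row2_surj (c *: (row2 1 0 *m Sprod n (fun i => x i.+1))).
rewrite Ev /Smx row2_mul => /row2_inj [Ea Eb].
have [m [q [r [H0 [H1 [H2 Hk]]]]]] := IH _ _ _ _ (esym Ev).
exists m.+1, (fun k => if k is k'.+1 then q k' else x 0%N),
  (fun k => if k is k'.+1 then r k' else a).
split; first done; split; first by rewrite /= H0 Eb; ring.
split; first done.
case=> [_|k Hk'] /=; last exact: Hk.
by rewrite H0 H1 Ea; ring.
Qed.

Lemma reached_we a b : reached_by_S a b -> weak_euclid a b.
Proof.
move=> [n [x [u [[u' Hu] E]]]].
apply: (@reached_we_aux n x u').
by rewrite -/(infty_act _) E scalerA mulrC Hu scale1r.
Qed.

Definition rpath a b := exists (n : nat) (w : nat -> A * A),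
  w 0%N = (1, 0) /\ same_class a b (w n).1 (w n).2 /\
  (forall i, (i <= n)%N -> unimodular (w i).1 (w i).2) /\
  (forall i, (i < n)%N -> Gedge (w i).1 (w i).2 (w i.+1).1 (w i.+1).2).

Lemma rpath_conn : (forall a b, unimodular a b -> rpath a b) -> Gamma_connected A.
Proof.
move=> H a b c d Hab Hcd.
have [n1 [w1 [W10 [Hs1 [Hu1 He1]]]]] := H a b Hab.
have [n2 [w2 [W20 [Hs2 [Hu2 He2]]]]] := H c d Hcd.
pose W j := if (j <= n1)%N then w1 (n1 - j)%N else w2 (j - n1)%N.
have WE1 : forall j, (j <= n1)%N -> W j = w1 (n1 - j)%N by move=> j Hj; rewrite /W Hj.
have WE2 : forall j, (n1 <= j)%N -> W j = w2 (j - n1)%N.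
  move=> j Hj; rewrite /W; case: ifP => Hj'.
    have -> : j = n1 by apply/eqP; rewrite eqn_leq Hj Hj'.
    by rewrite subnn W10 W20.
  by [].
exists (n1 + n2)%N, W; split; first by rewrite WE1 // subn0.
split; first by rewrite WE2 ?leq_addr // addKn.
split.
  move=> i Hi; case: (leqP i n1) => Hi'.
    by rewrite WE1 //; apply: Hu1; rewrite leq_subr.
  by rewrite WE2; [apply: Hu2; rewrite leq_subLR | apply: ltnW].
move=> i Hi; case: (ltnP i n1) => Hi'.
  rewrite (WE1 i (ltnW Hi')) (WE1 i.+1 Hi').
  have -> : (n1 - i = (n1 - i.+1).+1)%N by rewrite subnSK.
  by apply: Gedge_sym; apply: He1; rewrite ltn_subrL; apply/andP; split => //;
     apply: leq_ltn_trans Hi'.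
rewrite (WE2 i Hi') (WE2 i.+1 (leqW Hi')) subSn //; apply: He2.
by rewrite ltn_subLR.
Qed.

Lemma GL2_inf_unimod (M : 'M[A]_2) :
  GL2 M -> unimodular ((row2 1 0 *m M) 0 0) ((row2 1 0 *m M) 0 1).
Proof.
have [a [b [c [d E]]]] := mx2_surj M; subst M.
rewrite inf_mul !mxE /= => H; exact: GL2_unimod H.
Qed.

Lemma edge_lemma (y : A) (T : 'M[A]_2) : GL2 T ->
  Gedge ((row2 1 0 *m T) 0 0) ((row2 1 0 *m T) 0 1)
        ((row2 1 0 *m (Smx y *m T)) 0 0) ((row2 1 0 *m (Smx y *m T)) 0 1).
Proof.
move=> HT; have [e [f [g [h ET]]]] := mx2_surj T; subst T.
rewrite /Gedge /Smx mx2_mul !row2_mul !mxE /=.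
have -> : mx2 (1 * e + 0 * g) (1 * f + 0 * h)
    (1 * (y * e + 1 * g) + 0 * (1 * e + 0 * g))
    (1 * (y * f + 1 * h) + 0 * (1 * f + 0 * h)) = mx2 1 0 y 1 *m mx2 e f g h.
  by rewrite mx2_mul; congr mx2; ring.
apply: GL2_mul HT.
by apply: (@GL2_mx2 _ _ _ _ 1 0 (-y) 1); rewrite mx2_mul mx2_1; congr mx2; ring.
Qed.

Lemma reached_rpath a b : reached_by_S a b -> rpath a b.
Proof.
move=> [n [x [u [Hu E]]]].
pose T k := if k is k'.+1 then Sprod k' x else 1%:M.
pose w k := ((row2 1 0 *m T k) 0 0, (row2 1 0 *m T k) 0 1).
have TGL : forall k, GL2 (T k) by case=> [|k] /=; [exact: GL2_1 | exact: Sprod_GL].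
exists n.+1, w; split; first by rewrite /w /= mulmx1 !mxE.
split.
  exists u; split => //; rewrite /w /= -/(infty_act _) E !mxE /=; by split.
split; first by move=> i _; apply: GL2_inf_unimod.
move=> i _; rewrite /w.
have -> : T i.+1 = Smx (x i) *m T i by case: i => [|i] //=; rewrite mulmx1.
exact: edge_lemma.
Qed.

Lemma step_lemma p q p' q' u (s : seq A) : is_unitA u ->
  row2 p q = u *: (row2 1 0 *m Sl s) -> Gedge p q p' q' ->
  exists u' s', is_unitA u' /\ row2 p' q' = u' *: (row2 1 0 *m Sl s').
Proof.
move=> Hu Ep [N [MN NM]].
have [Q [PQ QP]] := Sl_GL s.
have [e [f [g [h EQ]]]] := mx2_surj Q; subst Q.
have [c [d Hr]] := row2_surj (row2 p' q' *m mx2 e f g h).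
have Hpq : row2 p q *m mx2 e f g h = row2 u 0.
  by rewrite Ep -scalemxAl -mulmxA PQ mulmx1 scale_row2 mulr1 mulr0.
have MQ : mx2 p q p' q' *m mx2 e f g h = mx2 u 0 c d.
  move: Hpq Hr; rewrite !row2_mul mx2_mul => /row2_inj [-> ->] /row2_inj [-> ->] //.
have KM : (Sl s *m N) *m (mx2 p q p' q' *m mx2 e f g h) = 1%:M.
  by rewrite mulmxA -(mulmxA (Sl s) N) NM mulmx1 PQ.
have [k1 [k2 [k3 [k4 EK]]]] := mx2_surj (Sl s *m N).
move: KM; rewrite EK MQ mx2_mul mx2_1 => /mx2_inj [_ _ _].
rewrite mulr0 add0r => Hd.
exists d, (k4 * c :: s); split; first by exists k4; rewrite mulrC.
have -> : row2 p' q' = row2 c d *m Sl s.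
  by rewrite -Hr -mulmxA QP mulmx1.
rewrite [Sl _]/= mulmxA scalemxAl; congr (_ *m _).
rewrite /Smx row2_mul scale_row2; congr row2.
  by rewrite mul1r mul0r addr0 mulrA (mulrC d) Hd mul1r.
by rewrite mul1r mul0r addr0 mulr1.
Qed.

Lemma conn_reached : Gamma_connected A -> forall a b, unimodular a b -> reached_by_S a b.
Proof.
move=> H a b Hab.
have [|n [w [Hs0 [Hsn [Hun He]]]]] := H 1 0 a b _ Hab.
  by exists 1, 0; rewrite mul1r mul0r addr0.
have inv : forall k, (k <= n)%N -> exists u (s : seq A), is_unitA u /\
    row2 (w k).1 (w k).2 = u *: (row2 1 0 *m Sl s).
  elim=> [|k IH] Hk.
    move: Hs0 => [u [Hu [E1 E2]]]; exists u, [::]; split => //.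
    by rewrite /= mulmx1 E1 E2 scale_row2.
  have [u [s [Hu E]]] := IH (ltnW Hk).
  exact: step_lemma Hu E (He k Hk).
have [u [s [[u' Hu] E]]] := inv n (leqnn n).
move: Hsn => [v [[v' Hv] [E1 E2]]].
have [m [x Ex]] := Sl_Sprod s.
exists m, x, (u' * v); split.
  exists (u * v'); have -> : u' * v * (u * v') = (u * u') * (v * v') by ring.
  by rewrite Hu Hv mulr1.
rewrite /infty_act Ex.
have -> : row2 1 0 *m Sl s = u' *: row2 (w n).1 (w n).2.
  by rewrite E scalerA mulrC Hu scale1r.
by rewrite E1 E2 -scale_row2 scalerA.
Qed.

Lemma in_GE2_mul (M N : 'M[A]_2) : in_GE2 M -> in_GE2 N -> in_GE2 (M *m N).
Proof.
elim=> [|G M' HG _ IH] HN; first by rewrite mul1mx.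
by rewrite -mulmxA; apply: GE2_mul HG (IH HN).
Qed.
Lemma in_GE2_gen (G : 'M[A]_2) : GE2_generator G -> in_GE2 G.
Proof. by move=> HG; rewrite -(mulmx1 G); apply: GE2_mul HG (GE2_one A). Qed.

Lemma Smx_GE2 (x : A) : in_GE2 (Smx x).
Proof.
have -> : Smx x = mx2 1 x 0 1 *m (mx2 1 1 0 1 *m (mx2 1 0 (-1) 1 *m
   (mx2 1 1 0 1 *m mx2 (-1) 0 0 1))).
  by rewrite /Smx !mx2_mul; congr mx2; ring.
have U1 : is_unitA (1 : A) by exists 1; rewrite mulr1.
have Um : is_unitA (-1 : A) by exists (-1); rewrite mulrNN mulr1.
apply: in_GE2_mul; first by apply: in_GE2_gen; left; exists x.
apply: in_GE2_mul; first by apply: in_GE2_gen; left; exists 1.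
apply: in_GE2_mul; first by apply: in_GE2_gen; right; left; exists (-1).
apply: in_GE2_mul; first by apply: in_GE2_gen; left; exists 1.
by apply: in_GE2_gen; right; right; exists (-1), 1.
Qed.

Lemma Sprod_GE2 n (x : nat -> A) : in_GE2 (Sprod n x).
Proof.
elim: n => [|n IH] /=; first exact: Smx_GE2.
exact: in_GE2_mul (Smx_GE2 _) IH.
Qed.

Lemma reached_GE2 : (forall a b, unimodular a b -> reached_by_S a b) -> GE2_ring A.
Proof.
move=> H M HM; have [a [b [c [d EM]]]] := mx2_surj M; subst M.
have [n [x [u [[u' Hu] E]]]] := H a b (GL2_unimod HM).
move: HM => [N [MN NM]].
have [Q [PQ QP]] := Sprod_GL n x.
have [e [f [g [h EQ]]]] := mx2_surj Q; subst Q.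
have [c' [d' Hr]] := row2_surj (row2 c d *m mx2 e f g h).
have Hab : row2 a b *m mx2 e f g h = row2 u' 0.
  have -> : row2 a b = u' *: (row2 1 0 *m Sprod n x).
    by rewrite -/(infty_act _) E scalerA mulrC Hu scale1r.
  by rewrite -scalemxAl -mulmxA PQ mulmx1 scale_row2 mulr1 mulr0.
have MQ : mx2 a b c d *m mx2 e f g h = mx2 u' 0 c' d'.
  move: Hab Hr; rewrite !row2_mul mx2_mul => /row2_inj [-> ->] /row2_inj [-> ->] //.
have KM : (Sprod n x *m N) *m (mx2 a b c d *m mx2 e f g h) = 1%:M.
  by rewrite mulmxA -(mulmxA (Sprod n x) N) NM mulmx1 PQ.
have [k1 [k2 [k3 [k4 EK]]]] := mx2_surj (Sprod n x *m N).
move: KM; rewrite EK MQ mx2_mul mx2_1 => /mx2_inj [_ _ _].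
rewrite mulr0 add0r => Hd.
have -> : mx2 a b c d = mx2 a b c d *m mx2 e f g h *m Sprod n x.
  by rewrite -mulmxA QP mulmx1.
rewrite MQ.
have -> : mx2 u' 0 c' d' = mx2 1 0 (c' * u) 1 *m mx2 u' 0 0 d'.
  rewrite mx2_mul; congr mx2; rewrite ?mul1r ?mul0r ?mulr0 ?addr0 ?add0r //.
  by rewrite -mulrA Hu mulr1.
apply: in_GE2_mul; last exact: Sprod_GE2.
apply: in_GE2_mul; first by apply: in_GE2_gen; right; left; exists (c' * u).
apply: in_GE2_gen; right; right; exists u', d'; split.
  by exists u; rewrite mulrC.
by split => //; exists k4; rewrite mulrC.
Qed.

Lemma utrick u u' (l r : A) : u * u' = 1 -> u * u' * l = r -> l = r.
Proof. by move=> H; rewrite H mul1r. Qed.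

Lemma GE2_diagSl (M : 'M[A]_2) : in_GE2 M ->
  exists u v (s : seq A), is_unitA u /\ is_unitA v /\ M = mx2 u 0 0 v *m Sl s.
Proof.
elim=> [|G M' HG _ [u [v [s [[u' Hu] [[v' Hv] ->]]]]]].
  exists 1, 1, [::]; do 2!(split; first by exists 1; rewrite mulr1).
  by rewrite /= mulmx1 mx2_1.
case: HG => [[y ->]|[[y ->]|[u1 [v1 [[u1' Hu1] [[v1' Hv1] ->]]]]]].
- exists u, v, (u' * y * v :: 0 :: s); split; first by exists u'.
  split; first by exists v'.
  rewrite [Sl _]/= !mulmxA; congr (_ *m _).
  rewrite /Smx !mx2_mul; congr mx2; first [ring | apply: (utrick Hu); ring | apply: (utrick Hv); ring].
- exists u, v, (0 :: v' * y * u :: s); split; first by exists u'.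
  split; first by exists v'.
  rewrite [Sl _]/= !mulmxA; congr (_ *m _).
  rewrite /Smx !mx2_mul; congr mx2; first [ring | apply: (utrick Hu); ring | apply: (utrick Hv); ring].
- exists (u1 * u), (v1 * v), s; split.
    exists (u' * u1'); have -> : u1 * u * (u' * u1') = (u * u') * (u1 * u1') by ring.
    by rewrite Hu Hu1 mulr1.
  split.
    exists (v' * v1'); have -> : v1 * v * (v' * v1') = (v * v') * (v1 * v1') by ring.
    by rewrite Hv Hv1 mulr1.
  rewrite mulmxA mx2_mul; congr (mx2 _ _ _ _ *m _); ring.
Qed.

Lemma GE2_reached : GE2_ring A -> forall a b, unimodular a b -> reached_by_S a b.
Proof.
move=> H a b [x [y Hxy]].
have HM : GL2 (mx2 a b (-y) x).
  apply: (@GL2_mx2 _ _ _ _ x (-b) y a); rewrite mx2_mul mx2_1; congr mx2;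
    rewrite -?Hxy; ring.
have [u [v [s [[u' Hu] [_ E]]]]] := GE2_diagSl (H _ HM).
have [n [z Ez]] := Sl_Sprod s.
exists n, z, u'; split; first by exists u; rewrite mulrC.
have E2 : row2 1 0 *m mx2 a b (-y) x = u *: (row2 1 0 *m Sl s).
  rewrite E mulmxA row2_mul scalemxAl scale_row2; congr (_ *m _); congr row2; ring.
move: E2; rewrite row2_mul.
have -> : row2 (1 * a + 0 * - y) (1 * b + 0 * x) = row2 a b.
  by congr row2; ring.
move=> E2; rewrite /infty_act Ez E2 scalerA mulrC Hu scale1r //.
Qed.

End S.

Theorem proposition3p7 (A : comPzRingType) :
  [<-> Gamma_connected A;
       (forall a b : A, unimodular a b -> reached_by_S a b);
       (forall a b : A, unimodular a b -> weak_euclid a b);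
       GE2_ring A].
Proof.
tfae.
- exact: conn_reached.
- by move=> H a b Hab; apply: reached_we; apply: H.
- move=> H; apply: reached_GE2 => a b Hab; exact: we_reached Hab (H a b Hab).
- move=> H; apply: rpath_conn => a b Hab; apply: reached_rpath.
  exact: GE2_reached.
Qed.
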